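(* Let $0<q<1$, let $n$ be a nonnegative integer, let $k$ be an integer with $0\le k\le n$, and let $x\in[0,1]$. Then $$B_{n-k,n}(1-x,q)=B_{k,n}(x,q),$$ and $$\sum_{k=0}^n B_{k,n}(x,q)=\bigl(1+[x]_q[1-x]_q(1-q)\bigr)^n=B_{n,q}(1:x),$$ where $B_{n,q}(1:x)$ denotes the modified $q$-Bernstein operator applied to the constant function $1$.
   Context: Let $q$ be a real number with $0<q<1$. For real $x$, the $q$-number is $[x]_q=\frac{1-q^x}{1-q}$. For a nonnegative integer $k$ and $x\in[0,1]$, the modified $q$-Bernstein polynomials $B_{k,n}(x,q)$, $n=0,1,2,\dots$, are defined by the generating function $$\frac{t^k e^{[1-x]_q t}[x]_q^k}{k!}=\sum_{n=0}^\infty B_{k,n}(x,q)\frac{t^n}{n!}.$$ For $f$ continuous on $[0,1]$, the modified $q$-Bernstein operator is $B_{n,q}(f:x)=\sum_{j=0}^n f\left(\frac{j}{n}\right)B_{j,n}(x,q)$ for $x\in[0,1]$. *)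

(* Defs.v *)
From HB Require Import structures.
From mathcomp Require Import all_boot all_order all_algebra.
From mathcomp Require Import all_classical all_reals all_analysis.
Set Implicit Arguments. Unset Strict Implicit. Unset Printing Implicit Defensive.
Import Order.TTheory GRing.Theory Num.Theory.
Local Open Scope ring_scope.

Definition qnum (R : realType) (q x : R) : R := (1 - q `^ x) / (1 - q).

(* Coefficient sequence (in t^m) of the formal power series t^k [x]_q^k / k! *)
Definition lead_coef_seq (R : realType) (q x : R) (k m : nat) : R :=
  if m == k then (qnum q x) ^+ k / (k`!)%:R else 0.

(* Coefficient sequence (in t^m) of e^{a t} *)
Definition exp_coef_seq (R : realType) (a : R) (m : nat) : R := a ^+ m / (m`!)%:R.

(* B_{k,n}(x,q) := n! * [t^n] ( t^k e^{[1-x]_q t} [x]_q^k / k! ),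
   the t^n-coefficient computed as the Cauchy product of the two series. *)
Definition qBern (R : realType) (q : R) (k n : nat) (x : R) : R :=
  (n`!)%:R * \sum_(i < n.+1)
     lead_coef_seq q x k i * exp_coef_seq (qnum q (1 - x)) (n - i).

Definition qBernOp (R : realType) (q : R) (n : nat) (f : R -> R) (x : R) : R :=
  \sum_(j < n.+1) f (j%:R / n%:R) * qBern q j n x.

(* Main.v *)
Require Import Defs.
From HB Require Import structures.
From mathcomp Require Import all_boot all_order all_algebra.
From mathcomp Require Import all_classical all_reals all_analysis.
From mathcomp Require Import ring lra.
Import Order.TTheory GRing.Theory Num.Theory.
Local Open Scope ring_scope.

Lemma qBernE (R : realType) (q : R) (n k : nat) (x : R) : (k <= n)%N ->
  qBern q k n x = (qnum q x) ^+ k * (qnum q (1 - x)) ^+ (n - k) *+ 'C(n, k).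
Proof.
move=> kn; rewrite /qBern.
have kn1 : (k < n.+1)%N by [].
rewrite (bigD1 (Ordinal kn1)) //= big1; last first.
  move=> i /eqP ne; rewrite /lead_coef_seq.
  case: eqP => [e|_]; last by rewrite mul0r.
  by case: ne; apply: val_inj.
rewrite addr0 /lead_coef_seq eqxx /exp_coef_seq.
rewrite -(bin_fact kn) !natrM -mulr_natr.
have h1 : (k`!)%:R != 0 :> R by rewrite pnatr_eq0 -lt0n fact_gt0.
have h2 : ((n - k)`!)%:R != 0 :> R by rewrite pnatr_eq0 -lt0n fact_gt0.
by field; rewrite h1 h2.
Qed.

Theorem theorem3 (R : realType) (q : R) (n k : nat) (x : R) :
  0 < q < 1 -> (k <= n)%N -> 0 <= x <= 1 ->
  qBern q (n - k) n (1 - x) = qBern q k n x /\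
  \sum_(j < n.+1) qBern q j n x = (1 + qnum q x * qnum q (1 - x) * (1 - q)) ^+ n /\
  (1 + qnum q x * qnum q (1 - x) * (1 - q)) ^+ n = qBernOp q n (fun _ => 1) x.
Proof.
move=> /andP[q0 q1] kn _.
have hsum : \sum_(j < n.+1) qBern q j n x = (1 + qnum q x * qnum q (1 - x) * (1 - q)) ^+ n.
  have -> : 1 + qnum q x * qnum q (1 - x) * (1 - q) = qnum q (1 - x) + qnum q x.
    have hq : q `^ x * q `^ (1 - x) = q.
      rewrite -powRD; last by rewrite implybE (gt_eqF q0) orbT.
      by rewrite addrC subrK powRr1 // ltW.
    rewrite /qnum.
    have hq1 : 1 - q != 0 by rewrite subr_eq0 eq_sym (lt_eqF q1).
    apply/eqP; rewrite -subr_eq0.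
    set a := q `^ x in hq *; set b := q `^ (1 - x) in hq *.
    have -> : 1 + (1 - a) / (1 - q) * ((1 - b) / (1 - q)) * (1 - q) -
      ((1 - b) / (1 - q) + (1 - a) / (1 - q)) = (a * b - q) / (1 - q).
      by field.
    by rewrite hq subrr mul0r.
  rewrite exprDn; apply: eq_bigr => i _.
  rewrite qBernE; first by rewrite [X in X *+ _]mulrC.
  by rewrite -ltnS ltn_ord.
split; last split => //.
  rewrite (@qBernE _ q _ _ (1 - x) (leq_subr k n)) (@qBernE _ q _ _ x kn) (subKn kn) (bin_sub kn).
  have -> : 1 - (1 - x) = x by ring.
  by rewrite [X in X *+ _]mulrC.
rewrite -hsum /qBernOp; apply: eq_bigr => i _; by rewrite mul1r.
Qed.
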